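(* Fix a sequence $q_1,q_2,\dots$ of probability measures on $\mathbb{N}_0$ (a varying environment), $n\ge1$ and $z\ge1$, with notation as in the context. Then $$\mathbb{P}\big(\hat Z^{(0)}_n+\dots+\hat Z^{(n-1)}_n=0\big)=\prod_{k=0}^{n-1}\mathbb{P}\big(\hat Z^{(k)}_n=0\big)=\frac{\mathsf p_{n-1,n}}{\mathsf p_{-1,n}}\prod_{k=0}^{n-1}f_k'\big(f_{k,n}(0)\big),$$ with the convention $f_0(s):=s^z$.
   Context: Let $f_k$ be the p.g.f. of $q_k$, $f_{k,n}=f_{k+1}\circ\dots\circ f_n$, $f_{n,n}$ the identity. $(Z_j)$ is the branching process in varying environment: given $Z_{j-1}$, $Z_j$ is a sum of $Z_{j-1}$ i.i.d. variables of law $q_j$. Put $\mathsf p_{k,n}=1-f_{k,n}(0)$ for $0\le k<n$, $\mathsf p_{n,n}=1$, and $\mathsf p_{-1,n}=1-f_{0,n}(0)^z$ (the probability that $Z_n>0$ when $Z_0=z$); assume $\mathsf p_{k,n}>0$ for $-1\le k\le n$. Let $\hat Y_0,\dots,\hat Y_n$ be independent with $\mathbb{P}(\hat Y_0=i)=\frac{1-f_{0,n}(0)}{\mathsf p_{-1,n}}f_{0,n}(0)^{z-i-1}$ for $0\le i\le z-1$, and for $1\le k\le n$, $i\ge0$, $\mathbb{P}(\hat Y_k=i)=\frac{\mathsf p_{k,n}}{\mathsf p_{k-1,n}}\sum_{j\ge i+1}q_k(j)f_{k,n}(0)^{j-i-1}$. For $0\le k\le n$, let $(\hat Z^{(k)}_j)_{j\ge0}$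 be independent processes with $\hat Z^{(k)}_j=0$ for $j<k$, $\hat Z^{(k)}_k=\hat Y_k$, and for $j>k$, given $\hat Z^{(k)}_{j-1}$, $\hat Z^{(k)}_j$ is a sum of $\hat Z^{(k)}_{j-1}$ i.i.d. variables of law $q_j$. *)

(* Defs.v *)
From HB Require Import structures.
From mathcomp Require Import all_boot all_order all_algebra.
From mathcomp Require Import all_classical all_reals all_analysis.
Set Implicit Arguments. Unset Strict Implicit. Unset Printing Implicit Defensive.
Import Order.TTheory GRing.Theory Num.Theory.
Import numFieldNormedType.Exports.
Local Open Scope ring_scope.
Local Open Scope classical_set_scope.

Section BPVE.
Variable R : realType.

Definition is_prob_nat (q : nat -> R) : Prop :=
  (forall j, 0 <= q j) /\ (series q @ \oo --> (1 : R)).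

Definition pgf (q : nat -> R) (s : R) : R :=
  limn (series (fun j => q j * s ^+ j)).

Fixpoint fcomp (q : nat -> nat -> R) (k m : nat) (s : R) : R :=
  match m with
  | 0 => s
  | m'.+1 => pgf (q k.+1) (fcomp q k.+1 m' s)
  end.

(* f_{k,n} = f_{k+1} o ... o f_n, f_{n,n} = id *)
Definition fkn (q : nat -> nat -> R) (k n : nat) (s : R) : R := fcomp q k (n - k) s.

Definition pkn (q : nat -> nat -> R) (k n : nat) : R := 1 - fkn q k n 0.

Definition pm1n (q : nat -> nat -> R) (z n : nat) : R := 1 - (fkn q 0 n 0) ^+ z.

Definition fconv (q : nat -> nat -> R) (z k : nat) : R -> R :=
  if k == 0%N then (fun s => s ^+ z) else pgf (q k).

Definition yhat_law (q : nat -> nat -> R) (z n k i : nat) : R :=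
  if k == 0%N then
    (if (i < z)%N then
       (1 - fkn q 0 n 0) / pm1n q z n * (fkn q 0 n 0) ^+ (z - i - 1)
     else 0)
  else
    pkn q k n / pkn q k.-1 n *
      limn (series (fun j => if (i < j)%N then q k j * (fkn q k n 0) ^+ (j - i - 1)
                             else 0)).

Section Prob.
Context {d : measure_display} {T : measurableType d}.

Definition Pr (P : probability T R) (A : set T) : R := fine (P A).

Definition mutually_indep (P : probability T R) (I : eqType) (good : pred I)
    (X : I -> T -> nat) : Prop :=
  forall (s : seq I) (v : I -> nat), uniq s -> all good s ->
    Pr P (\bigcap_(i in [set` s]) [set w | X i w = v i]) =
    \prod_(i <- s) Pr P [set w | X i w = v i].

(* the processes \hat Z^{(k)} built from \hat Y_k and offspring variables
   xi k j i (the i-th individual of generation j-1 of process k) *)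
Fixpoint Zhat (Y : nat -> T -> nat) (xi : nat -> nat -> nat -> T -> nat)
    (k j : nat) (w : T) : nat :=
  match j with
  | 0 => if k == 0%N then Y 0%N w else 0%N
  | j'.+1 =>
      if (j'.+1 < k)%N then 0%N
      else if k == j'.+1 then Y k w
      else (\sum_(i < Zhat Y xi k j' w) xi k j'.+1 i w)%N
  end.

End Prob.

(* index set: inl k  ~ \hat Y_k ;  inr (k, j, i) ~ xi k j i *)
Definition bp_index := (nat + nat * nat * nat)%type.

Definition bp_family {T : Type} (Y : nat -> T -> nat)
    (xi : nat -> nat -> nat -> T -> nat) : bp_index -> T -> nat :=
  fun a => match a with inl k => Y k | inr (k, j, i) => xi k j i end.

Definition bp_good (n : nat) : pred bp_index :=
  fun a => match a with inl k => (k <= n)%N | inr (k, j, i) => (k <= n)%N && (k < j)%N end.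

End BPVE.

(* Main.v *)
Require Import Defs.
From HB Require Import structures.
From mathcomp Require Import all_boot all_order all_algebra.
From mathcomp Require Import all_classical all_reals all_analysis.
From mathcomp Require Import ring lra zify.
Import Order.TTheory GRing.Theory Num.Theory.
Import numFieldNormedType.Exports.
Local Open Scope ring_scope.
Local Open Scope classical_set_scope.


Section Aux.
Context {R : realType} {d : measure_display} {T : measurableType d} (P : probability T R).

Lemma Pr_fin (A : set T) : measurable A -> (Pr P A)%:E = P A.
Proof. by move=> mA; rewrite /Pr fineK // fin_num_measure. Qed.

Lemma Pr_sigma (F : nat -> set T) : (forall i, measurable (F i)) -> trivIset setT F ->
  series (fun i => Pr P (F i)) @ \oo --> Pr P (\bigcup_i F i).
Proof.
move=> mF tF.
have H := @measure_sigma_additive _ _ _ P _ mF tF.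
have mU : measurable (\bigcup_i F i) by exact: bigcupT_measurable.
rewrite [X in _ --> X](_ : _ = (Pr P (\bigcup_i F i))%:E) in H; last by rewrite Pr_fin.
move/fine_cvg: H; apply: cvg_trans; apply: near_eq_cvg; near=> n => /=.
rewrite /series /= -sum_fine //= => i _; exact: fin_num_measure.
Unshelve. all: by end_near. Qed.

End Aux.



Section Analysis.
Context {R : realType}.

Lemma cvg_eq_seq (u v : nat -> R) (l : R) : (forall N, u N = v N) -> v @ \oo --> l -> u @ \oo --> l.
Proof. by move=> e; rewrite (_ : u = v) //; apply/funext. Qed.

Lemma bern (r : R) i : 0 <= r <= 1 -> (1 + i%:R * (1 - r)) * r ^+ i <= 1.
Proof.
move=> /andP [r0 r1]; elim: i => [|i IH]; first by rewrite mul0r addr0 expr0 mulr1.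
rewrite exprS -natr1.
have ri : 0 <= r ^+ i := exprn_ge0 i r0.
have hi : 0 <= i%:R :> R := ler0n _ _.
have h : 0 <= (1 - r) ^+ 2 * (i%:R + 1) * r ^+ i.
  apply: mulr_ge0 => //; apply: mulr_ge0; [exact: sqr_ge0|by rewrite addr_ge0].
nra.
Qed.

Lemma bern2 (r : R) i : 0 <= r <= 1 -> i.+1%:R * r ^+ i * (1 - r) <= 1.
Proof.
move=> hr; have := bern r i hr; case/andP: hr => r0 r1.
have ri : 0 <= r ^+ i := exprn_ge0 i r0.
have hi : 0 <= i%:R :> R := ler0n _ _.
rewrite -natr1; nra.
Qed.

Lemma poly_geom (K : R) : 0 <= K < 1 -> exists C th,
  [/\ 0 <= th, th < 1 & forall i, (i.+1 * i.+2)%:R * K ^+ i <= C * th ^+ i].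
Proof.
move=> /andP [K0 K1].
set th := Num.sqrt K; set s := Num.sqrt th.
have th0 : 0 <= th := sqrtr_ge0 _.
have s0 : 0 <= s := sqrtr_ge0 _.
have thK : th ^+ 2 = K := sqr_sqrtr K0.
have sth : s ^+ 2 = th := sqr_sqrtr th0.
have th1 : th < 1.
  rewrite ltNge; apply/negP => h; move: K1; rewrite -thK ltNge; apply/negP/negPn.
  by rewrite expr2; nra.
have s1 : s < 1.
  rewrite ltNge; apply/negP => h; move: th1; rewrite -sth ltNge; apply/negP/negPn.
  by rewrite expr2; nra.
set dl := 1 - s.
have dl0 : 0 < dl by rewrite /dl subr_gt0.
exists ((1 / dl) * (1 / dl + 1)), th; split => // i.
have e1 : K ^+ i = th ^+ i * th ^+ i by rewrite -thK expr2 exprMn.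
have e2 : th ^+ i = s ^+ i * s ^+ i by rewrite -sth expr2 exprMn.
have si0 : 0 <= s ^+ i := exprn_ge0 i s0.
have si1 : s ^+ i <= 1 by rewrite exprn_ile1 // ltW.
have A1 : i.+1%:R * s ^+ i <= 1 / dl.
  have hs : 0 <= s <= 1 by rewrite s0 ltW.
  have : (i.+1%:R * s ^+ i) * dl <= 1 / dl * dl.
    by rewrite div1r mulVf ?gt_eqF //; exact: (bern2 s i hs).
  by rewrite ler_pM2r.
have A0 : 0 <= i.+1%:R * s ^+ i by rewrite mulr_ge0.
have B1 : i.+2%:R * s ^+ i <= 1 / dl + 1.
  rewrite -[i.+2]addn1 natrD mulrDl; apply: lerD; first exact: A1.
  by rewrite mul1r.
have B0 : 0 <= i.+2%:R * s ^+ i by rewrite mulr_ge0.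
have AB : (i.+1%:R * s ^+ i) * (i.+2%:R * s ^+ i) <= (1 / dl) * (1 / dl + 1).
  exact: ler_pM.
rewrite e1 {1}e2 natrM.
have -> : i.+1%:R * i.+2%:R * (s ^+ i * s ^+ i * th ^+ i) =
  (i.+1%:R * s ^+ i) * (i.+2%:R * s ^+ i) * th ^+ i by ring.
by apply: ler_wpM2r => //; exact: exprn_ge0.
Qed.

Lemma cvg_bound (c : R ^nat) K : 0 <= K < 1 -> (forall i, `|c i| <= (i.+1 * i.+2)%:R) ->
  cvgn (pseries c K).
Proof.
move=> hK hc; have [C [th [th0 th1 hb]]] := poly_geom K hK.
have K0 : 0 <= K by case/andP: hK.
have C0 : 0 <= C.
  have := hb 0%N; rewrite !expr0 !mulr1 => h.
  by apply: le_trans h; rewrite ler0n.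
apply: normed_cvg.
apply: (series_le_cvg (v_ := geometric C th)).
- by move=> i; exact: normr_ge0.
- by move=> i; rewrite /geometric /= mulr_ge0 // exprn_ge0.
- move=> i; rewrite /geometric /= normrM normrX (ger0_norm K0).
  apply: le_trans (hb i); apply: ler_wpM2r; first exact: exprn_ge0.
  exact: hc.
- by apply: is_cvg_geometric_series; rewrite ger0_norm.
Qed.

Lemma prob_le1 (q : nat -> R) : is_prob_nat q -> forall i, q i <= 1.
Proof.
move=> [q0 hq] i.
have nd : {homo series q : n m / (n <= m)%N >-> n <= m}.
  by apply: nondecreasing_series => k _ _; exact: q0.
have cq : cvgn (series q) by apply/cvg_ex; exists 1.
have := nondecreasing_cvgn_le nd cq i.+1.
rewrite (cvg_lim _ hq) // /series /= big_nat_recr //= => h.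
apply: le_trans h; rewrite lerDr; apply: sumr_ge0 => k _; exact: q0.
Qed.

Lemma pgf_cvg (q : nat -> R) s : is_prob_nat q -> 0 <= s <= 1 ->
  cvgn (series (fun j => q j * s ^+ j)).
Proof.
move=> hq /andP [s0 s1]; have [q0 cq] := hq.
apply: (series_le_cvg (v_ := q)).
- by move=> j; rewrite mulr_ge0 // exprn_ge0.
- exact: q0.
- by move=> j; rewrite ler_piMr // exprn_ile1.
- by apply/cvg_ex; exists 1.
Qed.

Lemma pgf_range (q : nat -> R) s : is_prob_nat q -> 0 <= s <= 1 -> 0 <= pgf q s <= 1.
Proof.
move=> hq hs; have [q0 cq] := hq; have := hs => /andP [s0 s1].
have c := pgf_cvg q s hq hs.
apply/andP; split.
  apply: limr_ge => //; near=> N; apply: sumr_ge0 => j _; rewrite mulr_ge0 ?exprn_ge0 //.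
have cq' : cvgn (series q) by apply/cvg_ex; exists 1.
have l1 : limn (series q) = 1 by exact: cvg_lim.
rewrite -l1 /pgf; apply: lim_series_le => // j.
by rewrite ler_piMr // exprn_ile1.
Unshelve. all: by end_near.
Qed.

Lemma pgf_deriv (q : nat -> R) x : is_prob_nat q -> 0 <= x < 1 ->
  series (fun i => i%:R * q i * x ^+ i.-1) @ \oo --> derive1 (pgf q) x.
Proof.
move=> hq /andP [x0 x1]; have [q0 cq] := hq.
have qb i : `|q i| <= 1 by rewrite ger0_norm // prob_le1.
have n1 i : 1 <= (i.+1 * i.+2)%:R :> R by rewrite ler1n muln_gt0.
have b0 i : `|q i| <= (i.+1 * i.+2)%:R := le_trans (qb i) (n1 i).
have b1 i : `|pseries_diffs q i| <= (i.+1 * i.+2)%:R.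
  rewrite /pseries_diffs normrM ger0_norm // natrM ler_pM2l ?ltr0Sn //.
  by apply: le_trans (qb _) _; rewrite ler1n.
have b2 i : `|pseries_diffs (pseries_diffs q) i| <= (i.+1 * i.+2)%:R.
  rewrite /pseries_diffs normrM ger0_norm // natrM ler_pM2l ?ltr0Sn //.
  rewrite normrM ger0_norm // -[X in _ <= X]mulr1 ler_pM2l ?ltr0Sn //.
set K := (1 + x) / 2.
have hK : 0 <= K < 1 by apply/andP; split; rewrite /K; lra.
have xK : `|x| < `|K| by rewrite !ger0_norm /K; lra.
have hx : 0 <= x < 1 by rewrite x0 x1.
have D := pseries_snd_diffs (cvg_bound _ _ hK b0) (cvg_bound _ _ hK b1) (cvg_bound _ _ hK b2) xK.
have -> : derive1 (pgf q) x = limn (pseries (pseries_diffs q) x).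
  by rewrite derive1E; exact: (@derive_val _ _ _ _ _ _ _ D).
exact: pseries_diffs_equiv (cvg_bound _ _ hx b1).
Qed.

Lemma minnS_split (j N : nat) : (minn j N.+1 = minn j N + (N < j)%N)%N.
Proof. by case: (leqP j N) => h; lia. Qed.

Lemma exch (q : nat -> R) x : is_prob_nat q -> 0 <= x <= 1 ->
  cvgn (series (fun j => j%:R * q j * x ^+ j.-1)) ->
  series (fun i => limn (series (fun j => if (i < j)%N then q j * x ^+ (j - i - 1) else 0)) * x ^+ i)
    @ \oo --> limn (series (fun j => j%:R * q j * x ^+ j.-1)).
Proof.
move=> [q0 cq] /andP [x0 x1] ca.
set a := fun j => j%:R * q j * x ^+ j.-1.
set Dv := limn (series a).
set L := fun i => limn (series (fun j => if (i < j)%N then q j * x ^+ (j - i - 1) else 0)).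
have xp k : 0 <= x ^+ k := exprn_ge0 k x0.
have xl k : x ^+ k <= 1 := exprn_ile1 k x0 x1.
have cb i : series (fun j => if (i < j)%N then q j * x ^+ (j - i - 1) else 0) @ \oo --> L i.
  apply: (series_le_cvg (v_ := q)).
  - by move=> j; case: ifP => _ //; rewrite mulr_ge0.
  - exact: q0.
  - by move=> j; case: ifP => _; [rewrite ler_piMr|].
  - by apply/cvg_ex; exists 1.
have ce i : series (fun j => if (i < j)%N then q j * x ^+ j.-1 else 0) @ \oo --> L i * x ^+ i.
  have H := cvgMr_tmp (b := x ^+ i) (cb i).
  eapply cvg_eq_seq; last exact: H. move=> N.
  rewrite /series /= mulr_suml; apply: eq_bigr => j _.
  case: ifP => hij; last by rewrite mul0r.
  by rewrite -mulrA -exprD; congr (_ * _ ^+ _); lia.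
pose m N j := (minn j N)%:R * q j * x ^+ j.-1.
have cm N : series (m N) @ \oo --> \sum_(i < N) L i * x ^+ i.
  elim: N => [|N IH].
    rewrite big_ord0; eapply cvg_eq_seq; last exact: cvg_cst. move=> K.
    by rewrite /series /= big1 // => j _; rewrite /m minn0 !mul0r.
  rewrite big_ord_recr /=.
  have H := cvgD IH (ce N).
  eapply cvg_eq_seq; last exact: H. move=> K.
  rewrite [RHS]/GRing.add /= /series /= -big_split /=; apply: eq_bigr => j _.
  rewrite /m minnS_split natrD !mulrDl; case: ifP => _; first by rewrite mul1r.
  by rewrite !mul0r addr0.
have a0 j : 0 <= a j by rewrite /a !mulr_ge0.
have m0 N j : 0 <= m N j by rewrite /m !mulr_ge0.
have ma N j : m N j <= a j.
  by rewrite /m /a ler_wpM2r // ler_wpM2r // ler_nat geq_minl.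
apply: (squeeze_cvgr (f := series a) (h := fun _ => Dv)); last exact: cvg_cst.
- near=> N; rewrite /series /= !big_mkord; apply/andP; split.
    have nd : {homo series (m N) : n m / (n <= m)%N >-> n <= m}.
      by apply: nondecreasing_series => k _ _; exact: m0.
    have cmN : cvgn (series (m N)) by apply/cvg_ex; eexists; exact: cm.
    have := nondecreasing_cvgn_le nd cmN N.
    rewrite (cvg_lim _ (cm N)) // /series /= big_mkord => h.
    apply: le_trans h; apply: ler_sum => j _.
    by rewrite /m /a (minn_idPl (ltnW (ltn_ord j))).
  rewrite -(cvg_lim _ (cm N)) //.
  apply: lim_series_le => //; first by apply/cvg_ex; eexists; exact: cm.
- exact: ca.
Unshelve. all: by end_near.
Qed.

Lemma cvg_ev_cst (u : nat -> R) (l : R) N0 : (forall N, (N0 <= N)%N -> u N = l) -> u @ \oo --> l.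
Proof. by move=> h; apply: cvg_near_cst; exists N0 => // N /= hN; exact: h. Qed.
End Analysis.


Section Core.
Context {R : realType} (q : nat -> nat -> R) (n : nat) {d : measure_display}
  {T : measurableType d} (P : probability T R) (Y : nat -> T -> nat)
  (xi : nat -> nat -> nat -> T -> nat).
Hypothesis hmeas : forall a v, bp_good n a -> measurable [set w | bp_family Y xi a w = v].
Hypothesis hind : mutually_indep P (bp_good n) (bp_family Y xi).

Local Notation X := (bp_family Y xi).

Definition cyl (s : seq bp_index) (v : bp_index -> nat) : set T :=
  \bigcap_(i in [set` s]) [set w | X i w = v i].

Lemma cylP s v w : cyl s v w <-> (forall i, i \in s -> X i w = v i).
Proof. by split => H i /H. Qed.

Lemma cyl_cons a s v : cyl (a :: s) v = [set w | X a w = v a] `&` cyl s v.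
Proof.
apply/seteqP; split => w.
  move/cylP => H; split; first by apply: H; rewrite inE eqxx.
  by apply/cylP => i hi; apply: H; rewrite inE hi orbT.
move=> [h1 /cylP h2]; apply/cylP => i; rewrite inE => /orP [/eqP -> //|]; exact: h2.
Qed.

Lemma cyl_nil v : cyl [::] v = setT.
Proof. by apply/seteqP; split => w // _; apply/cylP. Qed.

Lemma cyl_measurable s v : all (bp_good n) s -> measurable (cyl s v).
Proof.
elim: s => [|a s IH] /=; first by rewrite cyl_nil.
move=> /andP [ga gs]; rewrite cyl_cons; apply: measurableI; first exact: hmeas.
exact: IH.
Qed.

Lemma cyl_cat s s' v v' : (forall b, b \in s' -> b \notin s) ->
  cyl s v `&` cyl s' v' = cyl (s ++ s') (fun b => if b \in s then v b else v' b).
Proof.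
move=> hd; apply/seteqP; split => w.
  move=> [/cylP h1 /cylP h2]; apply/cylP => i; rewrite mem_cat => /orP [hi|hi].
    by rewrite hi; exact: h1.
  by rewrite (negbTE (hd _ hi)); exact: h2.
move/cylP => h; split; apply/cylP => i hi.
  by rewrite h ?mem_cat ?hi // hi.
by rewrite h ?mem_cat ?hi ?orbT // (negbTE (hd _ hi)).
Qed.

Lemma Pr_cyl s v : uniq s -> all (bp_good n) s ->
  Pr P (cyl s v) = \prod_(i <- s) Pr P [set w | X i w = v i].
Proof. by move=> us gs; rewrite /cyl hind. Qed.

Lemma Pr_setT : Pr P setT = 1.
Proof. by rewrite /Pr probability_setT. Qed.

Lemma Pr_set0 : Pr P set0 = 0.
Proof. by rewrite /Pr measure0. Qed.

Definition indep (D : set T) (S : pred bp_index) :=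
  measurable D /\ forall s v, uniq s -> all (bp_good n) s -> all S s ->
    Pr P (D `&` cyl s v) = Pr P D * Pr P (cyl s v).

Lemma indep_setT S : indep setT S.
Proof. by split => // s v _ _ _; rewrite setTI Pr_setT mul1r. Qed.

Lemma indep_cylI D S s v : indep D S -> uniq s -> all (bp_good n) s -> all S s ->
  indep (D `&` cyl s v) (fun b => S b && (b \notin s)) /\
  Pr P (D `&` cyl s v) = Pr P D * Pr P (cyl s v).
Proof.
move=> [mD hD] us gs Ss; split; last exact: hD.
split; first by apply: measurableI => //; exact: cyl_measurable.
move=> s' v' us' gs' Ss'.
have hd : forall b, b \in s' -> b \notin s.
  by move=> b bs; have := allP Ss' b bs => /andP [].
have Ss2 : all S s' by apply/allP => b bs; have := allP Ss' b bs => /andP [].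
have ucat : uniq (s ++ s').
  rewrite cat_uniq us us' andbT; apply/hasPn => b bs; exact: hd.
have gcat : all (bp_good n) (s ++ s') by rewrite all_cat gs gs'.
have Scat : all S (s ++ s') by rewrite all_cat Ss Ss2.
rewrite -setIA cyl_cat // hD // hD //.
rewrite !Pr_cyl // big_cat /= -mulrA; congr (_ * (_ * _)).
  by rewrite big_seq_cond [RHS]big_seq_cond; apply: eq_bigr => i /andP [-> _].
by rewrite big_seq_cond [RHS]big_seq_cond; apply: eq_bigr => i /andP [/hd /negbTE -> _].
Qed.

Lemma cyl1 a v0 : cyl [:: a] (fun _ => v0) = [set w | X a w = v0].
Proof. by rewrite cyl_cons cyl_nil setIT. Qed.


Lemma scale_lim (C L : R) (u : nat -> R) :
  series (fun i => C * u i) @ \oo --> L -> L = C * limn (series u).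
Proof.
move=> h; have [C0|C0] := eqVneq C 0.
  rewrite C0 in h *.
  rewrite mul0r; apply: (cvg_unique _ h) => //=.
  have E0 : series (fun i => 0 * u i) = (fun _ => 0 : R).
    by apply/funext => N; rewrite /series /= big1 // => i _; rewrite mul0r.
  rewrite E0; exact: cvg_cst.
have hu : series u @ \oo --> C^-1 * L.
  have H1 := cvgMl_tmp (a := C^-1) h.
  rewrite (_ : series u = (fun N => C^-1 * series (fun i => C * u i) N)); first exact: H1.
  apply/funext => N.
  by rewrite /series /= mulr_sumr; apply: eq_bigr => i _; rewrite mulrA mulVf // mul1r.
by rewrite (cvg_lim _ hu) // mulrA divff // mul1r.
Unshelve. all: by end_near.
Qed.

Hypothesis hxi : forall k j i m, (k <= n)%N -> (k < j)%N -> Pr P [set w | xi k j i w = m] = q j m.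

Fixpoint ext (k t j m : nat) (w : T) : nat :=
  match t with 0 => m | t'.+1 => ext k t' j.+1 (\sum_(i < m) xi k j.+1 i w) w end.

Definition Ev k t j a y := [set w | ext k t j.+1 (a + \sum_(i < y) xi k j.+1 i w) w = 0%N].

Definition needed (k j y : nat) : pred bp_index := fun b =>
  if b is inr (k', j', i) then (k' == k) && ((j.+1 < j')%N || ((j' == j.+1) && (i < y)%N)) else false.

Definition F j := fkn q j n 0.

Lemma F_rec j : (j < n)%N -> F j = pgf (q j.+1) (F j.+1).
Proof. by move=> jn; rewrite /F /fkn -(subnSK jn). Qed.

Lemma F_n : F n = 0.
Proof. by rewrite /F /fkn subnn. Qed.

Definition Pcore k t j y a := measurable (Ev k t j a y) /\ forall D S, indep D S ->
  (forall b, needed k j y b -> S b) -> Pr P (D `&` Ev k t j a y) = Pr P D * (F j.+1 ^+ a * F j ^+ y).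

Lemma core_step k t j y : (j < n)%N -> (k <= j)%N -> (forall a, Pcore k t j y a) -> forall a, Pcore k t j y.+1 a.
Proof.
move=> jn kj IH a.
pose b := inr (k, j.+1, y) : bp_index.
have gb : bp_good n b by rewrite /= ltnS kj andbT (leq_trans kj) // ltnW.
have Ee : Ev k t j a y.+1 = \bigcup_v ([set w | X b w = v] `&` Ev k t j (a + v) y).
  apply/seteqP; split => w.
    rewrite /Ev /= big_ord_recr /= => h; exists (xi k j.+1 y w) => //; split => //=.
    by rewrite -addnA [(xi _ _ _ _ + _)%N]addnC.
  move=> [v _ [/= <-]]; rewrite /Ev /= big_ord_recr /= => h.
  by rewrite [(_ + xi _ _ _ _)%N]addnC addnA.
have mpiece : forall v, measurable ([set w | X b w = v] `&` Ev k t j (a + v) y).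
  by move=> v; apply: measurableI; [exact: hmeas|exact: (proj1 (IH _))].
split; first by rewrite Ee; exact: bigcupT_measurable.
move=> D S iD hS.
have Sb : S b by apply: hS; rewrite /= eqxx eqxx ltnSn orbT.
rewrite Ee setI_bigcupr.
have := Pr_sigma P (fun v => D `&` ([set w | X b w = v] `&` Ev k t j (a + v) y)).
move=> /(_ _ _) H.
have {H} := H (fun v => measurableI _ _ iD.1 (mpiece v)).
have tr : trivIset setT (fun v => D `&` ([set w | X b w = v] `&` Ev k t j (a + v) y)).
  by move=> v v' _ _ [w [[_ [/= h1 _]] [_ [/= h2 _]]]]; rewrite -h1 -h2.
move=> /(_ tr) H.
set C := Pr P D * (F j.+1 ^+ a * F j ^+ y).
suff : series (fun v => C * (q j.+1 v * F j.+1 ^+ v)) @ \oo --> Pr P (\bigcup_v (D `&` ([set w | X b w = v] `&` Ev k t j (a + v) y))).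
  move/scale_lim => ->; rewrite [F j ^+ y.+1]exprS {1}(F_rec _ jn) /C /pgf -!mulrA; do 2! congr (_ * _); exact: mulrC.
apply: cvg_trans _ H; apply: near_eq_cvg; near=> N; rewrite /series /=.
apply: eq_bigr => v _.
have gbs : all (bp_good n) [:: b] by apply/allP => x; rewrite inE => /eqP ->.
have Sbs : all S [:: b] by apply/allP => x; rewrite inE => /eqP ->.
have [iD' PrD'] := indep_cylI D S [:: b] (fun _ => v) iD erefl gbs Sbs.
rewrite cyl1 in iD' PrD'.
rewrite setIA (proj2 (IH (a + v)%N) _ _ iD') //; last first.
  move=> b' nb'; apply/andP; split.
    apply: hS; move: nb'; case: b' => // [[[k' j'] i]] /= /andP [-> /orP [->//|/andP [-> hi]]].
    by rewrite (ltn_trans hi) ?orbT.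
  move: nb'; case: b' => // [[[k' j'] i]] /= /andP [_ hh].
  rewrite inE /b; apply/negP => /eqP [_ e1 e2].
  by move: hh; rewrite e1 e2 ltnn eqxx /= ltnn.
rewrite PrD' (_ : [set w | X b w = v] = [set w | xi k j.+1 y w = v]) //.
have kn' : (k <= n)%N by apply: leq_trans kj (ltnW jn).
have kj1 : (k < j.+1)%N by rewrite ltnS.
rewrite hxi // /C exprD.
move: (Pr P D) (q j.+1 v) (F j.+1 ^+ a) (F j.+1 ^+ v) (F j ^+ y) => p1 p2 p3 p4 p5.
by rewrite -!mulrA; congr (_ * _); rewrite mulrC -!mulrA; congr (_ * _); rewrite mulrC -!mulrA.
Unshelve. all: by end_near.
Qed.

Lemma core k t : forall j, (j.+1 + t = n)%N -> (k <= j)%N -> forall y a, Pcore k t j y a.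
Proof.
elim: t => [|t IH] j hj kj.
  have jn : (j < n)%N by rewrite -hj addn0.
  elim=> [|y IHy]; last exact: core_step.
  case=> [|a]; rewrite /Pcore.
    have -> : Ev k 0 j 0 0 = setT by apply/seteqP; split => w //= _; rewrite /Ev /= big_ord0.
    split => // D S _ _; by rewrite setIT !expr0 !mulr1.
  have -> : Ev k 0 j a.+1 0 = set0 by apply/seteqP; split => w //=; rewrite /Ev /= big_ord0.
  have jn1 : j.+1 = n by rewrite -hj addn0.
  by split => // D S _ _; rewrite setI0 Pr_set0 jn1 F_n expr0n /= mul0r mulr0.
have jn : (j < n)%N by rewrite -hj addSn ltnS leq_addr.
elim=> [|y IHy]; last exact: core_step.
move=> a; rewrite /Pcore.
have -> : Ev k t.+1 j a 0 = Ev k t j.+1 0 a.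
  by apply/seteqP; split => w; rewrite /Ev /= big_ord0 addn0.
have hj' : (j.+2 + t = n)%N by rewrite -hj addSnnS.
have [mE hE] := IH j.+1 hj' (leq_trans kj (leqnSn _)) a 0.
split => // D S iD hS.
rewrite (hE D S iD) ?expr0 ?mul1r ?mulr1 //.
move=> b nb; apply: hS; move: nb; case: b => // [[[k' j'] i]] /= /andP [-> /orP [h|/andP [/eqP -> _]]] /=.
  by rewrite (ltn_trans _ h).
by rewrite ltnSn.
Qed.

Lemma Zhat_kk k w : Zhat Y xi k k w = Y k w.
Proof. by case: k => //= k; rewrite ltnn eqxx. Qed.

Lemma Zhat_ext k w : forall t j, (k <= j)%N -> (j + t = n)%N ->
  Zhat Y xi k n w = ext k t j (Zhat Y xi k j w) w.
Proof.
elim=> [|t IH] j kj hj; first by rewrite -hj addn0.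
have ez : Zhat Y xi k j.+1 w = (\sum_(i < Zhat Y xi k j w) xi k j.+1 i w)%N.
  have h1 : (j.+1 < k)%N = false by rewrite ltnNge (leq_trans kj) ?leqnSn.
  have h2 : (k == j.+1) = false by apply/eqP => e; move: kj; rewrite e ltnn.
  by rewrite /= h1 h2.
rewrite (IH j.+1) ?ez //; first exact: leq_trans kj (leqnSn _).
by rewrite addSnnS.
Qed.

Definition after (k : nat) : pred bp_index := fun b =>
  if b is inr (k', j', _) then (k' == k) && (k < j')%N else false.

Lemma proc k : (k < n)%N ->
  measurable [set w | Zhat Y xi k n w = 0%N] /\
  forall D S, indep D S -> S (inl k) -> (forall b, after k b -> S b) ->
   series (fun i => Pr P D * (Pr P [set w | Y k w = i] * F k ^+ i)) @ \oo -->
     Pr P (D `&` [set w | Zhat Y xi k n w = 0%N]).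
Proof.
move=> kn.
set t := (n - k.+1)%N.
have hj : (k.+1 + t = n)%N by rewrite /t subnKC.
pose a := inl k : bp_index.
have ga : bp_good n a by rewrite /= ltnW.
have Ee : [set w | Zhat Y xi k n w = 0%N] = \bigcup_i ([set w | X a w = i] `&` Ev k t k 0 i).
  apply/seteqP; split => w.
    rewrite /= (Zhat_ext k w t.+1 k) ?leqnn ?addnS // Zhat_kk /= => h.
    by exists (Y k w) => //; split.
  move=> [i _ [/= <-]]; rewrite /Ev /= add0n => h.
  by rewrite (Zhat_ext k w t.+1 k) ?leqnn ?addnS // Zhat_kk.
have mpiece : forall i, measurable ([set w | X a w = i] `&` Ev k t k 0 i).
  by move=> i; apply: measurableI; [exact: hmeas|exact: (proj1 (core k t k hj (leqnn k) i 0))].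
split; first by rewrite Ee; exact: bigcupT_measurable.
move=> D S iD Sa hS.
rewrite Ee setI_bigcupr.
have := Pr_sigma P (fun i => D `&` ([set w | X a w = i] `&` Ev k t k 0 i)).
move=> /(_ _ _) H.
have {H} := H (fun i => measurableI _ _ (proj1 iD) (mpiece i)).
have tr : trivIset setT (fun i => D `&` ([set w | X a w = i] `&` Ev k t k 0 i)).
  by move=> v v' _ _ [w [[_ [/= h1 _]] [_ [/= h2 _]]]]; rewrite -h1 -h2.
move=> /(_ tr) H.
apply: cvg_trans _ H; apply: near_eq_cvg; near=> N; rewrite /series /=.
apply: eq_bigr => i _.
have gas : all (bp_good n) [:: a] by apply/allP => x; rewrite inE => /eqP ->.
have Sas : all S [:: a] by apply/allP => x; rewrite inE => /eqP ->.
have [iD' PrD'] := indep_cylI D S [:: a] (fun _ => i) iD erefl gas Sas.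
rewrite cyl1 in iD' PrD'.
rewrite setIA (proj2 (core k t k hj (leqnn k) i 0) _ _ iD') //; last first.
  move=> b nb; apply/andP; split.
    apply: hS; move: nb; case: b => // [[[k' j'] i']] /= /andP [-> /orP [h|/andP [/eqP -> _]]] /=.
      by rewrite (ltn_trans _ h).
    by rewrite ltnSn.
  by move: nb; case: b.
rewrite PrD' expr0 mul1r -mulrA.
by rewrite (_ : [set w | X a w = i] = [set w | Y k w = i]).
Unshelve. all: by end_near.
Qed.

Definition cc k := limn (series (fun i => Pr P [set w | Y k w = i] * F k ^+ i)).

Lemma proc_Pr k D S : (k < n)%N -> indep D S -> S (inl k) -> (forall b, after k b -> S b) ->
  Pr P (D `&` [set w | Zhat Y xi k n w = 0%N]) = Pr P D * cc k.
Proof. by move=> kn iD Sk hS; apply: scale_lim; exact: (proj2 (proc k kn) D S iD Sk hS). Qed.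

Lemma Pr_E k : (k < n)%N -> Pr P [set w | Zhat Y xi k n w = 0%N] = cc k.
Proof.
move=> kn; rewrite -[X in Pr P X]setTI (proc_Pr k setT predT kn) ?Pr_setT ?mul1r //.
exact: indep_setT.
Qed.

Definition procS (m : nat) : pred bp_index := fun b =>
  match b with inl k => (m <= k)%N | inr (k, _, _) => (m <= k)%N end.

Definition G m := [set w | forall k, (k < m)%N -> Zhat Y xi k n w = 0%N].

Lemma G_ind m : (m <= n)%N -> indep (G m) (procS m) /\ Pr P (G m) = \prod_(k < m) cc k.
Proof.
elim: m => [|m IH] mn.
  have -> : G 0 = setT by apply/seteqP; split => w // _ k.
  by split; [exact: indep_setT|rewrite Pr_setT big_ord0].
have [iG PrG] := IH (ltnW mn).
have [mE _] := proc m mn.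
have -> : G m.+1 = G m `&` [set w | Zhat Y xi m n w = 0%N].
  apply/seteqP; split => w.
    by move=> h; split; [move=> k km; apply: h; rewrite ltnS ltnW|apply: h].
  by move=> [h1 h2] k; rewrite ltnS leq_eqVlt => /orP [/eqP ->//|]; exact: h1.
have hm : forall b, after m b -> procS m b.
  by case=> // [[[k' j'] i]] /= /andP [/eqP -> _].
have PrGE : Pr P (G m `&` [set w | Zhat Y xi m n w = 0%N]) = Pr P (G m) * cc m.
  by apply: (proc_Pr m (G m) (procS m)) => //=.
split; last by rewrite PrGE PrG big_ord_recr.
split; first by apply: measurableI => //; exact: (proj1 iG).
move=> s v us gs Ss.
have Ss' : all (procS m) s.
  by apply/allP => b /(allP Ss); case: b => [k|[[k j] i]] /= /ltnW.
have [iGc PrGc] := indep_cylI (G m) (procS m) s v iG us gs Ss'.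
rewrite setIAC (proc_Pr m _ (fun b => procS m b && (b \notin s))) //.
- by rewrite PrGc PrGE; ring.
- rewrite /= leqnn /=; apply/negP => /(allP Ss) /=; by rewrite ltnn.
- move=> b ab; rewrite hm //=; apply/negP => /(allP Ss).
  by move: ab; case: b => // [[[k' j'] i]] /= /andP [/eqP -> _]; rewrite ltnn.
Qed.

Hypothesis hq : forall k, (1 <= k)%N -> is_prob_nat (q k).

Lemma F_range j : (j <= n)%N -> 0 <= F j <= 1.
Proof.
move=> jn; have [m ->] : exists m, j = (n - m)%N by exists (n - j)%N; rewrite subKn.
elim: m => [|m IH]; first by rewrite subn0 F_n lexx ler01.
case: (leqP n m) => hm.
  by rewrite (_ : (n - m.+1 = n - m)%N) //; lia.
have e : (n - m.+1).+1 = (n - m)%N by lia.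
rewrite F_rec; last by lia.
rewrite e; apply: pgf_range => //; apply: hq; lia.
Qed.

Context (z : nat).
Hypothesis hp : forall k, (k <= n)%N -> 0 < pkn q k n.
Hypothesis hY : forall k i, (k <= n)%N -> Pr P [set w | Y k w = i] = yhat_law q z n k i.

Lemma cc_pos k : (0 < k)%N -> (k < n)%N ->
  cc k = pkn q k n / pkn q k.-1 n * derive1 (fconv q z k) (F k).
Proof.
case: k => // k _ kn.
have hqk : is_prob_nat (q k.+1) := hq k.+1 (ltn0Sn k).
have hF : 0 <= F k.+1 <= 1 := F_range k.+1 (ltnW kn).
have hF1 : F k.+1 < 1.
  by have := hp k.+1 (ltnW kn); rewrite /pkn subr_gt0.
have hx : 0 <= F k.+1 < 1 by case/andP: hF => -> _.
have D := pgf_deriv (q k.+1) (F k.+1) hqk hx.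
have ca : cvgn (series (fun j => j%:R * q k.+1 j * F k.+1 ^+ j.-1)).
  by apply/cvg_ex; eexists; exact: D.
have E := exch (q k.+1) (F k.+1) hqk hF ca.
rewrite (cvg_lim _ D) // in E.
have E2 := cvgMl_tmp (a := pkn q k.+1 n / pkn q k n) E.
rewrite /cc /fconv /=.
apply: cvg_lim => //.
eapply cvg_eq_seq; last exact: E2.
move=> N; rewrite /series /= mulr_sumr; apply: eq_bigr => i _.
by rewrite hY ?(ltnW kn) // /yhat_law /= -mulrA.
Qed.

Lemma cc_zero : (0 < n)%N -> cc 0 = pkn q 0 n / pm1n q z n * derive1 (fconv q z 0) (F 0).
Proof.
move=> n0.
rewrite /fconv /= exp_derive1.
apply: cvg_lim => //.
apply: (cvg_ev_cst _ _ z) => N hN.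
have e2 : \sum_(z <= i < N) Pr P [set w | Y 0 w = i] * F 0 ^+ i = 0.
  rewrite big_nat_cond big1 // => i /andP [/andP [hi _] _].
  by rewrite hY // /yhat_law /= ltnNge hi /= mul0r.
have e1 : \sum_(0 <= i < z) Pr P [set w | Y 0 w = i] * F 0 ^+ i =
    \sum_(0 <= i < z) ((1 - F 0) / pm1n q z n * F 0 ^+ z.-1).
  apply: eq_big_nat => i /andP [_ hi]; rewrite hY // /yhat_law /= hi (_ : fkn q 0 n 0 = F 0) //.
  have -> : F 0 ^+ z.-1 = F 0 ^+ (z - i - 1) * F 0 ^+ i.
    by rewrite -exprD; congr (_ ^+ _); lia.
  by rewrite !mulrA.
rewrite /series /= (big_cat_nat (leq0n z) hN) /= e1 e2 addr0.
rewrite sumr_const_nat subn0 /pkn.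
have -> : z%:R *: F 0 ^+ z.-1 = F 0 ^+ z.-1 * z%:R by rewrite mulrC.
by rewrite (_ : fkn q 0 n 0 = F 0) // -mulr_natr mul1r mulrA mulr_natr.
Qed.

Lemma final : (1 <= n)%N ->
  Pr P [set w | (\sum_(k < n) Zhat Y xi k n w)%N = 0%N]
    = \prod_(k < n) Pr P [set w | Zhat Y xi k n w = 0%N]
  /\ \prod_(k < n) Pr P [set w | Zhat Y xi k n w = 0%N]
    = pkn q n.-1 n / pm1n q z n *
      \prod_(k < n) derive1 (fconv q z k) (fkn q k n 0).
Proof.
move=> n1.
have eP : \prod_(k < n) Pr P [set w | Zhat Y xi k n w = 0%N] = \prod_(k < n) cc k.
  by apply: eq_bigr => k _; rewrite Pr_E.
split.
  rewrite eP -(proj2 (G_ind n (leqnn n))); congr (Pr P _).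
  apply/seteqP; split => w /=.
    move/eqP; rewrite sum_nat_eq0 => /forallP h k kn.
    exact: (eqP (h (Ordinal kn))).
  by move=> h; apply/eqP; rewrite sum_nat_eq0; apply/forallP => k; apply/eqP; exact: h.
rewrite eP.
pose r := fun k => if k == 0%N then pkn q 0 n / pm1n q z n else pkn q k n / pkn q k.-1 n.
have ec : forall k : 'I_n, cc k = r k * derive1 (fconv q z k) (fkn q k n 0).
  move=> [[|k] kn] /=; rewrite /r /=; [exact: cc_zero|exact: cc_pos].
rewrite (eq_bigr _ (fun k _ => ec k)) big_split /=; congr (_ * _).
have tel : forall m, (m < n)%N -> \prod_(k < m.+1) r k = pkn q m n / pm1n q z n.
  elim=> [|m IH] mn; first by rewrite big_ord1 /r.
  rewrite big_ord_recr /= IH ?(ltnW mn) // /r /=.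
  have mn' : (m <= n)%N by lia.
  have h : pkn q m n != 0 by rewrite gt_eqF // hp.
  by rewrite mulrC mulrA divfK.
have e : \prod_(k < n.-1.+1) r k = pkn q n.-1 n / pm1n q z n.
  by apply: tel; rewrite prednK.
by move: e; rewrite prednK.
Qed.

End Core.

Theorem lemma3p1 (R : realType) (q : nat -> nat -> R) (n z : nat)
  (d : measure_display) (T : measurableType d) (P : probability T R)
  (Y : nat -> T -> nat) (xi : nat -> nat -> nat -> T -> nat) :
  (forall k, (1 <= k)%N -> is_prob_nat (q k)) ->
  (1 <= n)%N -> (1 <= z)%N ->
  (forall k, (k <= n)%N -> 0 < pkn q k n) ->
  0 < pm1n q z n ->
  (forall a v, bp_good n a -> measurable [set w | bp_family Y xi a w = v]) ->
  mutually_indep P (bp_good n) (bp_family Y xi) ->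
  (forall k i, (k <= n)%N -> Pr P [set w | Y k w = i] = yhat_law q z n k i) ->
  (forall k j i m, (k <= n)%N -> (k < j)%N -> Pr P [set w | xi k j i w = m] = q j m) ->
  Pr P [set w | (\sum_(k < n) Zhat Y xi k n w)%N = 0%N]
    = \prod_(k < n) Pr P [set w | Zhat Y xi k n w = 0%N]
  /\ \prod_(k < n) Pr P [set w | Zhat Y xi k n w = 0%N]
    = pkn q n.-1 n / pm1n q z n *
      \prod_(k < n) derive1 (fconv q z k) (fkn q k n 0).
Proof.
move=> hq n1 z1 hp hpm hmeas hind hY hxi.
exact: (@final R q n d T P Y xi hmeas hind hxi hq z hp hY n1).
Qed.
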